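(* Let $(A,B)$ be controllable and let $H^{(i)}$ be the sequence $H^{(i+1)}=G+\gamma M(L(H^{(i)}))^\top H^{(i)} M(L(H^{(i)}))$ with $H^{(0)}=0$. Then there exists a matrix $Y$ such that $0\preceq H^{(i)}\preceq Y$ for all $i$.
   Context: Let $A\in\mathbb{R}^{n\times n}$, $B\in\mathbb{R}^{n\times m}$, $Q=Q^\top\succeq0$, $R=R^\top\succ0$, $\gamma\in[0,1)$, $N\in\mathbb{N}$. Symmetric matrices $H$ of size $((N+2)n+m)$ are partitioned into blocks $h_{ab}$, $a,b\in\{x,u,r_0,\dots,r_N\}$ (sizes $n,m,n,\dots,n$). For $H$ with invertible $h_{uu}$, $L(H)=-h_{uu}^{-1}[h_{ux},h_{ur_1},\dots,h_{ur_N}]=[L_x,L_1,\dots,L_N]$, and $L(0):=0$. $G=\begin{bmatrix}Q&0&-Q&0\\0&R&0&0\\-Q&0&Q&0\\0&0&0&0\end{bmatrix}$ (blocks $x$, $u$, $r_0$, $(r_1,\dots,r_N)$). $M(L)$ is the square matrix mapping $[x;u;r_0;\dots;r_N]$ to $[Ax+Bu;\;L_x(Ax+Bu)+L_1r_2+\dots+L_{N-1}r_N;\;r_1;\dots;r_N;\;0]$. *)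

(* Defs.v *)
From HB Require Import structures.
From mathcomp Require Import all_boot all_order all_algebra.
Set Implicit Arguments. Unset Strict Implicit. Unset Printing Implicit Defensive.
Import Order.TTheory GRing.Theory Num.Theory.
Local Open Scope ring_scope.

(* Dimension of the augmented state [x; u; r_0; r_1; ...; r_N]. *)
Definition dimH (n m N : nat) : nat := n + m + n + N * n.

Definition ix {n m N : nat} (i : 'I_n) : 'I_(dimH n m N) :=
  lshift (N * n) (lshift n (lshift m i)).
Definition iu {n m N : nat} (j : 'I_m) : 'I_(dimH n m N) :=
  lshift (N * n) (lshift n (rshift n j)).
Definition ir0 {n m N : nat} (i : 'I_n) : 'I_(dimH n m N) :=
  lshift (N * n) (rshift (n + m) i).
(* ir k i : i-th coordinate of block r_(k+1), k : 'I_N *)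
Definition ir {n m N : nat} (k : 'I_N) (i : 'I_n) : 'I_(dimH n m N) :=
  rshift (n + m + n) (mxvec_index k i).
(* the whole (r_1,...,r_N) block, ordered r_1, r_2, ..., r_N *)
Definition irr {n m N : nat} (p : 'I_(N * n)) : 'I_(dimH n m N) :=
  rshift (n + m + n) p.

Definition Sel {R : pzRingType} {p d : nat} (f : 'I_p -> 'I_d) : 'M[R]_(p, d) :=
  \matrix_(i, j) (f i == j)%:R.

Section Defs.
Variables (R : realFieldType) (n m N : nat).
Local Notation D := (dimH n m N).

(* selection of the block r_j (j = 0..N); r_j := 0 for j > N *)
Definition Rsel (j : nat) : 'M[R]_(n, D) :=
  if j is k.+1 then
    match (insub k : option 'I_N) with
    | Some kk => Sel (@ir n m N kk)
    | None => 0
    end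
  else Sel (@ir0 n m N).

Definition h_uu (H : 'M[R]_D) : 'M[R]_m := mxsub (@iu n m N) (@iu n m N) H.
Definition h_ux (H : 'M[R]_D) : 'M[R]_(m, n) := mxsub (@iu n m N) (@ix n m N) H.
Definition h_ur (H : 'M[R]_D) : 'M[R]_(m, N * n) := mxsub (@iu n m N) (@irr n m N) H.

(* L(H) = - h_uu^-1 [h_ux, h_ur1, ..., h_urN] = [L_x, L_1, ..., L_N];
   L(H) := 0 when h_uu is not invertible (in particular L(0) = 0 for m > 0). *)
Definition Lgain (H : 'M[R]_D) : 'M[R]_(m, n + N * n) :=
  if h_uu H \in unitmx then - (invmx (h_uu H) *m row_mx (h_ux H) (h_ur H)) else 0.

Definition Lx (L : 'M[R]_(m, n + N * n)) : 'M[R]_(m, n) := lsubmx L.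
(* Lk L k = L_(k+1) *)
Definition Lk (L : 'M[R]_(m, n + N * n)) (k : 'I_N) : 'M[R]_(m, n) :=
  \matrix_(a, i) rsubmx L a (mxvec_index k i).

Variables (A : 'M[R]_n) (B : 'M[R]_(n, m)) (Q : 'M[R]_n) (Rc : 'M[R]_m).

Definition xnext : 'M[R]_(n, D) := A *m Sel (@ix n m N) + B *m Sel (@iu n m N).

(* L_x (Ax + Bu) + L_1 r_2 + ... + L_(N-1) r_N   (+ L_N * 0) *)
Definition unext (L : 'M[R]_(m, n + N * n)) : 'M[R]_(m, D) :=
  Lx L *m xnext + \sum_(k < N) Lk L k *m Rsel k.+2.

(* M(L) : [x;u;r_0;...;r_N] |-> [Ax+Bu; L_x(Ax+Bu)+L_1 r_2+...+L_(N-1) r_N; r_1; ...; r_N; 0] *)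
Definition Mmat (L : 'M[R]_(m, n + N * n)) : 'M[R]_D :=
  (Sel (@ix n m N))^T *m xnext
  + (Sel (@iu n m N))^T *m unext L
  + \sum_(j < N.+1) (Rsel j)^T *m Rsel j.+1.

(* G = [Q 0 -Q 0; 0 R 0 0; -Q 0 Q 0; 0 0 0 0] *)
Definition Gmat : 'M[R]_D :=
  (Sel (@ix n m N))^T *m Q *m Sel (@ix n m N)
  - (Sel (@ix n m N))^T *m Q *m Sel (@ir0 n m N)
  - (Sel (@ir0 n m N))^T *m Q *m Sel (@ix n m N)
  + (Sel (@ir0 n m N))^T *m Q *m Sel (@ir0 n m N)
  + (Sel (@iu n m N))^T *m Rc *m Sel (@iu n m N).

Fixpoint Hseq (gamma : R) (i : nat) : 'M[R]_D :=
  if i is i'.+1 then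
    let H := Hseq gamma i' in
    Gmat + gamma *: ((Mmat (Lgain H))^T *m H *m Mmat (Lgain H))
  else 0.

End Defs.

Definition psd {R : realFieldType} {d : nat} (X : 'M[R]_d) : Prop :=
  forall v : 'cV[R]_d, 0 <= (v^T *m X *m v) ord0 ord0.
Definition pd {R : realFieldType} {d : nat} (X : 'M[R]_d) : Prop :=
  forall v : 'cV[R]_d, v != 0 -> 0 < (v^T *m X *m v) ord0 ord0.
Definition loewner_le {R : realFieldType} {d : nat} (X Y : 'M[R]_d) : Prop :=
  psd (Y - X).

(* controllability matrix [B, AB, ..., A^(n-1) B] : column k*m+j is column j of A^k B *)
Definition ctrb {R : realFieldType} {n m : nat} (A : 'M[R]_n) (B : 'M[R]_(n, m))
  : 'M[R]_(n, n * m) :=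
  \matrix_(i < n) mxvec (\matrix_(k < n, j < m) (A ^+ k *m B) i j).
Definition controllable {R : realFieldType} {n m : nat} (A : 'M[R]_n) (B : 'M[R]_(n, m))
  : Prop := \rank (ctrb A B) = n.

(* Main.v *)
Require Import Defs.
From HB Require Import structures.
From mathcomp Require Import all_boot all_order all_algebra.
From mathcomp Require Import zify ring lra.
Set Implicit Arguments. Unset Strict Implicit. Unset Printing Implicit Defensive.
Import Order.TTheory GRing.Theory Num.Theory.
Local Open Scope ring_scope.

Section Sel.
Variable R : realFieldType.

Lemma SelSelT p q d (f : 'I_p -> 'I_d) (g : 'I_q -> 'I_d) :
  Sel f *m (Sel g)^T = \matrix_(i, j) (f i == g j)%:R :> 'M[R]_(p, q).
Proof.
apply/matrixP => i j; rewrite !mxE (bigD1 (f i)) //= big1 ?addr0.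
  by rewrite !mxE eqxx mul1r eq_sym.
by move=> a Ha; rewrite !mxE eq_sym (negPf Ha) mul0r.
Qed.

Lemma Sel_disj p q d (f : 'I_p -> 'I_d) (g : 'I_q -> 'I_d) :
  (forall i j, nat_of_ord (f i) != nat_of_ord (g j)) -> Sel f *m (Sel g)^T = 0 :> 'M[R]_(p, q).
Proof.
move=> H; rewrite SelSelT; apply/matrixP => i j; rewrite !mxE.
by case: eqP => // E; move: (H i j); rewrite E eqxx.
Qed.

Lemma Sel_id p d (f : 'I_p -> 'I_d) : injective f ->
  Sel f *m (Sel f)^T = 1%:M :> 'M[R]_p.
Proof.
move=> H; rewrite SelSelT; apply/matrixP => i j; rewrite !mxE.
by rewrite (inj_eq H).
Qed.

Lemma SelM p d q (f : 'I_p -> 'I_d) (X : 'M[R]_(d, q)) :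
  Sel f *m X = \matrix_(i, j) X (f i) j.
Proof.
apply/matrixP => i j; rewrite !mxE (bigD1 (f i)) //= big1 ?addr0.
  by rewrite !mxE eqxx mul1r.
by move=> a Ha; rewrite !mxE eq_sym (negPf Ha) mul0r.
Qed.

Lemma MSelT p d q (f : 'I_p -> 'I_d) (X : 'M[R]_(q, d)) :
  X *m (Sel f)^T = \matrix_(i, j) X i (f j).
Proof.
apply/matrixP => i j; rewrite !mxE (bigD1 (f j)) //= big1 ?addr0.
  by rewrite !mxE eqxx mulr1.
by move=> a Ha; rewrite !mxE eq_sym (negPf Ha) mulr0.
Qed.

Lemma mxsub_Sel p q d (f : 'I_p -> 'I_d) (g : 'I_q -> 'I_d) (X : 'M[R]_d) :
  mxsub f g X = Sel f *m X *m (Sel g)^T.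
Proof. by rewrite MSelT SelM; apply/matrixP => i j; rewrite !mxE. Qed.

Lemma trD p q (X Y : 'M[R]_(p, q)) : (X + Y)^T = X^T + Y^T.
Proof. by apply/matrixP => i j; rewrite !mxE. Qed.
Lemma trB p q (X Y : 'M[R]_(p, q)) : (X - Y)^T = X^T - Y^T.
Proof. by apply/matrixP => i j; rewrite !mxE. Qed.
Lemma trZ p q c (X : 'M[R]_(p, q)) : (c *: X)^T = c *: X^T.
Proof. by apply/matrixP => i j; rewrite !mxE. Qed.

Lemma addE p q (X Y : 'M[R]_(p, q)) i j : (X + Y) i j = X i j + Y i j.
Proof. by rewrite mxE. Qed.

Lemma oppE p q (X : 'M[R]_(p, q)) i j : (- X) i j = - X i j.
Proof. by rewrite mxE. Qed.

End Sel.

Lemma mxvec_index_inj m n (i i' : 'I_m) (j j' : 'I_n) :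
  (mxvec_index i j == mxvec_index i' j') = ((i == i') && (j == j')).
Proof.
rewrite /mxvec_index (inj_eq (@cast_ord_inj _ _ _)) (inj_eq (@enum_rank_inj _)).
by rewrite xpair_eqE.
Qed.

Section Main.
Variables (R : realFieldType) (n m N : nat).
Local Notation D := (dimH n m N).
Local Notation Sx := (Sel (@ix n m N) : 'M[R]_(n, D)).
Local Notation Su := (Sel (@iu n m N) : 'M[R]_(m, D)).
Local Notation S0 := (Sel (@ir0 n m N) : 'M[R]_(n, D)).
Local Notation Sr k := (Sel (@ir n m N k) : 'M[R]_(n, D)).
Local Notation RS j := (Rsel R n m N j).

Lemma val_ix i : nat_of_ord (@ix n m N i) = nat_of_ord i. Proof. by []. Qed.
Lemma val_iu i : nat_of_ord (@iu n m N i) = (n + nat_of_ord i)%N. Proof. by []. Qed.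
Lemma val_ir0 i : nat_of_ord (@ir0 n m N i) = (n + m + nat_of_ord i)%N. Proof. by []. Qed.
Lemma val_ir k i : nat_of_ord (@ir n m N k i) = (n + m + n + nat_of_ord (mxvec_index k i))%N.
Proof. by []. Qed.

Ltac vals := let i := fresh "i" in let j := fresh "j" in intros i j; rewrite ?val_ix ?val_iu ?val_ir0 ?val_ir;
  apply/eqP; move: (ltn_ord i) (ltn_ord j); lia.

Lemma SxSuT : Sx *m Su^T = 0. Proof. apply: Sel_disj; vals. Qed.
Lemma SuSxT : Su *m Sx^T = 0. Proof. apply: Sel_disj; vals. Qed.
Lemma SxS0T : Sx *m S0^T = 0. Proof. apply: Sel_disj; vals. Qed.
Lemma S0SxT : S0 *m Sx^T = 0. Proof. apply: Sel_disj; vals. Qed.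
Lemma SuS0T : Su *m S0^T = 0. Proof. apply: Sel_disj; vals. Qed.
Lemma S0SuT : S0 *m Su^T = 0. Proof. apply: Sel_disj; vals. Qed.
Lemma SxSrT k : Sx *m (Sr k)^T = 0. Proof. apply: Sel_disj; vals. Qed.
Lemma SrSxT k : Sr k *m Sx^T = 0. Proof. apply: Sel_disj; vals. Qed.
Lemma SuSrT k : Su *m (Sr k)^T = 0. Proof. apply: Sel_disj; vals. Qed.
Lemma SrSuT k : Sr k *m Su^T = 0. Proof. apply: Sel_disj; vals. Qed.
Lemma S0SrT k : S0 *m (Sr k)^T = 0. Proof. apply: Sel_disj; vals. Qed.
Lemma SrS0T k : Sr k *m S0^T = 0. Proof. apply: Sel_disj; vals. Qed.

Lemma SxSxT : Sx *m Sx^T = 1%:M.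
Proof. apply: Sel_id => i j /(congr1 (@nat_of_ord _)); rewrite !val_ix; exact: val_inj. Qed.
Lemma SuSuT : Su *m Su^T = 1%:M.
Proof. apply: Sel_id => i j /(congr1 (@nat_of_ord _)); rewrite !val_iu => /eqP.
rewrite eqn_add2l => /eqP; exact: val_inj. Qed.
Lemma S0S0T : S0 *m S0^T = 1%:M.
Proof. apply: Sel_id => i j /(congr1 (@nat_of_ord _)); rewrite !val_ir0 => /eqP.
rewrite eqn_add2l => /eqP; exact: val_inj. Qed.
Lemma SrSrT k k' : Sr k *m (Sr k')^T = if k == k' then 1%:M else 0.
Proof.
rewrite SelSelT; apply/matrixP => i j; rewrite !mxE.
have -> : (@ir n m N k i == @ir n m N k' j) = ((k == k') && (i == j)).
  by rewrite /ir (inj_eq (@rshift_inj _ _)) mxvec_index_inj.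
by case: (k == k'); rewrite !mxE.
Qed.

Lemma Rsel_S (k : 'I_N) : RS k.+1 = Sr k.
Proof. by rewrite /Rsel valK. Qed.

Lemma Rsel_big j : (N < j)%N -> RS j = 0.
Proof.
case: j => // k Hk; rewrite /Rsel insubF //; apply/negbTE; rewrite -leqNgt; by [].
Qed.

Lemma Rsel_cases j : (j = 0%N /\ RS j = S0) \/
  (exists k : 'I_N, j = k.+1 /\ RS j = Sr k) \/ ((N < j)%N /\ RS j = 0).
Proof.
case: j => [|k]; first by left.
case: (ltnP k N) => Hk.
  by right; left; exists (Ordinal Hk); split => //; rewrite -Rsel_S.
by right; right; split => //; rewrite Rsel_big.
Qed.

Lemma SxRT j : Sx *m (RS j)^T = 0.
Proof.
case: (Rsel_cases j) => [[_ ->]|[[k [_ ->]]|[_ ->]]];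
  by rewrite ?SxS0T ?SxSrT ?trmx0 ?mulmx0.
Qed.
Lemma SuRT j : Su *m (RS j)^T = 0.
Proof.
case: (Rsel_cases j) => [[_ ->]|[[k [_ ->]]|[_ ->]]];
  by rewrite ?SuS0T ?SuSrT ?trmx0 ?mulmx0.
Qed.
Lemma RSxT j : RS j *m Sx^T = 0.
Proof.
case: (Rsel_cases j) => [[_ ->]|[[k [_ ->]]|[_ ->]]];
  by rewrite ?S0SxT ?SrSxT ?mul0mx.
Qed.
Lemma RSuT j : RS j *m Su^T = 0.
Proof.
case: (Rsel_cases j) => [[_ ->]|[[k [_ ->]]|[_ ->]]];
  by rewrite ?S0SuT ?SrSuT ?mul0mx.
Qed.
Lemma RRT j j' : RS j *m (RS j')^T = if (j == j') && (j <= N)%N then 1%:M else 0.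
Proof.
case: (Rsel_cases j) => [[-> ->]|[[k [-> ->]]|[Hj ->]]];
case: (Rsel_cases j') => [[-> ->]|[[k' [-> ->]]|[Hj' ->]]];
  rewrite ?S0S0T ?S0SrT ?SrS0T ?SrSrT ?trmx0 ?mulmx0 ?mul0mx //=.
- by case: ifP => // /andP [/eqP E]; move: Hj'; rewrite -E.
- by rewrite eqSS ltn_ord andbT -val_eqE.
- by case: ifP => // /andP [/eqP E]; move: Hj'; rewrite -E ltnNge => /negP; rewrite ltn_ord.
- by case: ifP => // /andP [_]; rewrite leqNgt Hj.
- by case: ifP => // /andP [_]; rewrite leqNgt Hj.
- by case: ifP => // /andP [_]; rewrite leqNgt Hj.
Qed.


Variables (A : 'M[R]_n) (B : 'M[R]_(n, m)) (Q : 'M[R]_n) (Rc : 'M[R]_m).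
Local Notation L0 := (0 : 'M[R]_(m, n + N * n)).
Local Notation M0 := (Mmat A B L0).
Local Notation xn := (xnext N A B).

Lemma unext0 : unext A B L0 = 0.
Proof.
rewrite /unext big1 ?addr0.
  have -> : Lx L0 = 0 by apply/matrixP => i j; rewrite !mxE.
  by rewrite mul0mx.
move=> k _; have -> : Lk L0 k = 0 by apply/matrixP => i j; rewrite !mxE.
by rewrite mul0mx.
Qed.

Lemma Mmat_dec L : Mmat A B L = M0 + Su^T *m unext A B L.
Proof. by rewrite /Mmat unext0 mulmx0 addr0 addrAC. Qed.

Lemma Mmat_def L : Mmat A B L = Sx^T *m xn + Su^T *m unext A B L
  + \sum_(j < N.+1) (RS j)^T *m RS j.+1.
Proof. by []. Qed.

Lemma SxM0 : Sx *m M0 = xn.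
Proof.
rewrite Mmat_def mulmxDr mulmxDr mulmxA SxSxT mul1mx mulmxA SxSuT mul0mx addr0.
rewrite mulmx_sumr big1 ?addr0 //.
by move=> j _; rewrite mulmxA SxRT mul0mx.
Qed.

Lemma SuM0 : Su *m M0 = 0.
Proof.
rewrite Mmat_def mulmxDr mulmxDr mulmxA SuSxT mul0mx mulmxA SuSuT mul1mx unext0 add0r.
rewrite mulmx_sumr big1 ?addr0 // => j _.
by rewrite mulmxA SuRT mul0mx.
Qed.

Lemma RM0 j : RS j *m M0 = RS j.+1.
Proof.
rewrite Mmat_def mulmxDr mulmxDr mulmxA RSxT mul0mx mulmxA RSuT mul0mx !add0r mulmx_sumr.
under eq_bigr do rewrite mulmxA RRT.
case: (leqP j N) => Hj.
  rewrite (bigD1 (Ordinal (Hj : (j < N.+1)%N))) // eqxx andbT mul1mx big1 => [|k Hk].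
    by rewrite [LHS]addr0.
  rewrite andbT; case: ifP => [/eqP E|_]; last by rewrite mul0mx.
  by move: Hk; rewrite -val_eqE /= E eqxx.
rewrite big1 ?Rsel_big //; first exact: ltnW.
by move=> k _; rewrite andbF mul0mx.
Qed.

Lemma xnS0 : xn *m S0^T = 0.
Proof. by rewrite /xnext mulmxDl -!mulmxA SxS0T SuS0T !mulmx0 addr0. Qed.

Lemma unS0 L : unext A B L *m S0^T = 0.
Proof.
rewrite /unext mulmxDl -mulmxA xnS0 mulmx0 add0r mulmx_suml big1 // => k _.
case: (Rsel_cases k.+2) => [[//]|[[k' [_ ->]]|[_ ->]]];
  by rewrite -mulmxA ?SrS0T ?mul0mx mulmx0.
Qed.

Lemma MS0 L : Mmat A B L *m S0^T = 0.
Proof.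
rewrite Mmat_def mulmxDl mulmxDl -!mulmxA xnS0 unS0 !mulmx0 !add0r mulmx_suml big1 // => j _.
case: (Rsel_cases j.+1) => [[//]|[[k' [_ ->]]|[_ ->]]];
  by rewrite -mulmxA ?SrS0T ?mul0mx mulmx0.
Qed.


Definition qf d (X : 'M[R]_d) (v : 'cV[R]_d) : R := (v^T *m X *m v) ord0 ord0.

Lemma qfD d (X Y : 'M[R]_d) v : qf (X + Y) v = qf X v + qf Y v.
Proof. by rewrite /qf mulmxDr mulmxDl mxE. Qed.
Lemma qfZ d c (X : 'M[R]_d) v : qf (c *: X) v = c * qf X v.
Proof. by rewrite /qf -scalemxAr -scalemxAl mxE. Qed.
Lemma qfM d p (X : 'M[R]_p) (M : 'M[R]_(p, d)) v :
  qf (M^T *m X *m M) v = qf X (M *m v).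
Proof. by rewrite /qf trmx_mul !mulmxA. Qed.
Lemma qf0 d (v : 'cV[R]_d) : qf 0 v = 0.
Proof. by rewrite /qf mulmx0 mul0mx mxE. Qed.
Lemma qf0v d (X : 'M[R]_d) : qf X 0 = 0.
Proof. by rewrite /qf mulmx0 mxE. Qed.

Lemma Lk_opp (X : 'M[R]_m) (a : 'M[R]_(m, n)) (b : 'M[R]_(m, N * n)) (k : 'I_N) :
  Lk (- (X *m row_mx a b)) k = - (X *m \matrix_(c, i) b c (mxvec_index k i)).
Proof.
rewrite /Lk mul_mx_row opp_row_mx row_mxKr; apply/matrixP => c i; rewrite !mxE.
by congr (- _); apply: eq_bigr => l _; rewrite !mxE.
Qed.

Lemma hk_def (H : 'M[R]_D) (k : 'I_N) :
  \matrix_(c, i) (h_ur H) c (mxvec_index k i) = Su *m H *m (Sr k)^T.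
Proof. by rewrite -mxsub_Sel; apply/matrixP => c i; rewrite !mxE. Qed.

Lemma SuHM0 (H : 'M[R]_D) : Su *m H *m S0^T = 0 ->
  Su *m H *m M0 = h_ux H *m xn + \sum_(k < N) (Su *m H *m (Sr k)^T) *m RS k.+2.
Proof.
move=> H0; rewrite Mmat_def mulmxDr mulmxDr unext0 !mulmx0 addr0 mulmxA.
rewrite /h_ux mxsub_Sel; congr (_ + _).
rewrite mulmx_sumr big_ord_recl /= mulmxA H0 mul0mx add0r.
by apply: eq_bigr => k _; rewrite mulmxA -Rsel_S.
Qed.

Lemma key_foc (H : 'M[R]_D) : Su *m H *m S0^T = 0 -> h_uu H \in unitmx ->
  Su *m H *m Mmat A B (Lgain H) = 0.
Proof.
move=> H0 Hu; rewrite Mmat_dec mulmxDr SuHM0 // mulmxA.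
have -> : Su *m H *m Su^T = h_uu H by rewrite /h_uu mxsub_Sel.
rewrite /unext /Lgain Hu mulmxDr mulmx_sumr.
have -> : Lx (- (invmx (h_uu H) *m row_mx (h_ux H) (h_ur H))) = - (invmx (h_uu H) *m h_ux H).
  by rewrite /Lx mul_mx_row opp_row_mx row_mxKl.
rewrite mulmxA mulmxN mulmxA (mulmxV Hu) mul1mx mulNmx.
under [X in _ + (_ + X)]eq_bigr do rewrite Lk_opp hk_def mulNmx mulmxN !mulmxA (mulmxV Hu) mul1mx.
by rewrite sumrN addrACA !subrr addr0.
Qed.


Lemma psd_qf d (X : 'M[R]_d) : psd X <-> forall v, 0 <= qf X v.
Proof. by []. Qed.
Lemma pd_qf d (X : 'M[R]_d) : pd X <-> forall v, v != 0 -> 0 < qf X v.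
Proof. by []. Qed.

Lemma pd_psd d (X : 'M[R]_d) : pd X -> psd X.
Proof.
move=> HX v; have [->|nz] := eqVneq v 0; first by rewrite mulmx0 mxE.
exact/ltW/HX.
Qed.

Lemma pd_unit d (X : 'M[R]_d) : pd X -> X \in unitmx.
Proof.
move=> HX; rewrite unitmxE unitfE; apply/negP => /det0P [v nz vX].
have := HX v^T; rewrite trmx_eq0 => /(_ nz); rewrite trmxK vX mul0mx mxE.
by rewrite ltxx.
Qed.

Lemma min_step (H : 'M[R]_D) z d : H^T = H -> psd H -> Su *m H *m S0^T = 0 ->
  (H = 0 \/ h_uu H \in unitmx) ->
  qf H (Mmat A B (Lgain H) *m z) <= qf H (M0 *m z + Su^T *m d).
Proof.
move=> HT Hpsd H0 [->|Hu]; first by rewrite !qf0.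
set v := Mmat A B (Lgain H) *m z.
have SHv : Su *m H *m v = 0 by rewrite /v mulmxA key_foc // mul0mx.
have vHS : v^T *m H *m Su^T = 0.
  transitivity ((Su *m H^T *m v)^T); first by rewrite !trmx_mul trmxK mulmxA.
  by rewrite HT SHv trmx0.
have -> : M0 *m z + Su^T *m d = v + Su^T *m (d - unext A B (Lgain H) *m z).
  rewrite /v (Mmat_dec (Lgain H)) (mulmxDl M0) -mulmxA mulmxBr -addrA; congr (_ + _); by rewrite addrC subrK.
move: (d - _) => e; clearbody v.
have t1 : (Su^T *m e)^T *m H *m v = 0.
  by rewrite trmx_mul trmxK -!mulmxA (mulmxA Su) SHv mulmx0.
have t2 : v^T *m H *m (Su^T *m e) = 0 by rewrite mulmxA vHS mul0mx.
rewrite /qf trD !mulmxDl !mulmxDr t1 t2 addr0 add0r addE.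
by rewrite lerDl; apply: Hpsd.
Qed.



Local Notation G := (Gmat N Q Rc).

Lemma Gdec : G = (Sx - S0)^T *m Q *m (Sx - S0) + Su^T *m Rc *m Su.
Proof.
rewrite /Gmat trB !mulmxBl !mulmxBr opprB; congr (_ + _).
by rewrite !addrA addrAC.
Qed.

Hypotheses (QT : Q^T = Q) (Qpsd : psd Q) (RcT : Rc^T = Rc) (Rcpd : pd Rc).

Lemma qfG v : qf G v = qf Q ((Sx - S0) *m v) + qf Rc (Su *m v).
Proof. by rewrite Gdec qfD !qfM. Qed.

Lemma G_psd : psd G.
Proof. by move=> v; rewrite -/(qf G v) qfG addr_ge0 //; [apply: Qpsd|apply: pd_psd]. Qed.

Lemma G_sym : G^T = G.
Proof. by rewrite Gdec [LHS]trD !trmx_mul !trmxK QT RcT !mulmxA. Qed.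

Lemma SuGS0 : Su *m G *m S0^T = 0.
Proof.
rewrite Gdec mulmxDr mulmxDl -!mulmxA SuS0T !mulmx0 addr0.
have E : Su *m (Sx - S0)^T = 0 by rewrite trB mulmxBr SuSxT SuS0T subrr.
by rewrite !mulmxA E !mul0mx.
Qed.

Lemma SuGSu : Su *m G *m Su^T = Rc.
Proof.
have E : (Sx - S0) *m Su^T = 0 by rewrite mulmxBl SxSuT S0SuT subrr.
rewrite Gdec mulmxDr mulmxDl -!mulmxA E !mulmx0 add0r.
by rewrite SuSuT mulmx1 !mulmxA SuSuT mul1mx.
Qed.

Variable gamma : R.
Hypothesis g0 : 0 <= gamma.
Local Notation Hs i := (Hseq N A B Q Rc gamma i).

Lemma Hinv i : (Hs i)^T = Hs i /\ psd (Hs i) /\ Su *m Hs i *m S0^T = 0 /\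
  (Hs i = 0 \/ pd (h_uu (Hs i))).
Proof.
elim: i => [|i [HT [Hp [H0 _]]]] /=.
  rewrite trmx0 mulmx0 mul0mx; split => //; split; last by split => //; left.
  by move=> v; rewrite mulmx0 mul0mx mxE.
set M := Mmat A B (Lgain (Hs i)).
split; first by rewrite trD trZ G_sym !trmx_mul trmxK HT !mulmxA.
split.
  move=> v; rewrite -/(qf _ v) qfD qfZ qfM addr_ge0 //; first exact: G_psd.
  by rewrite mulr_ge0 //; apply: Hp.
split.
  rewrite mulmxDr mulmxDl SuGS0 add0r -scalemxAr -scalemxAl -!mulmxA /M MS0 !mulmx0.
  by rewrite scaler0.
right => d nz; rewrite -/(qf _ d) /h_uu mxsub_Sel.
have -> : Su *m (G + gamma *: (M^T *m Hs i *m M)) *m Su^T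
  = (Su^T)^T *m (G + gamma *: (M^T *m Hs i *m M)) *m Su^T by rewrite trmxK.
have E : qf G (Su^T *m d) = qf Rc d by rewrite -qfM trmxK SuGSu.
rewrite qfM qfD qfZ E.
apply: (lt_le_trans (Rcpd nz)); rewrite lerDl mulr_ge0 // qfM; exact: Hp.
Qed.


Lemma traj_bound i : forall w : nat -> 'cV[R]_D,
  (forall t, exists d, w t.+1 = M0 *m w t + Su^T *m d) ->
  qf (Hs i) (w 0%N) <= \sum_(0 <= t < i) gamma ^+ t * qf G (w t).
Proof.
elim: i => [|i IH] w Hw.
  by rewrite big_geq // qf0.
rewrite big_nat_recl // expr0 mul1r /= qfD qfZ qfM lerD2l.
under eq_bigr do rewrite exprS -mulrA.
rewrite -mulr_sumr ler_wpM2l //.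
have [HT [Hp [H0 Hu]]] := Hinv i.
have [d Hd] := Hw 0%N.
apply: le_trans (IH (fun t => w t.+1) (fun t => Hw t.+1)).
rewrite Hd; apply: min_step => //.
by case: Hu => [->|/pd_unit]; [left|right].
Qed.


Local Notation SV j := (Sel (fun a : 'I_m => mxvec_index j a) : 'M[R]_(m, n * m)).

Lemma ctrb_sum : ctrb A B = \sum_(j < n) A ^+ j *m B *m SV j.
Proof.
apply/matrixP => i p; case/mxvec_indexP: p => k a.
rewrite mxE mxvecE mxE summxE (bigD1 k) //= big1 ?addr0.
  rewrite [RHS]mxE (bigD1 a) //= big1 => [|b Hb].
    by rewrite addr0 [Sel _ _ _]mxE eqxx mulr1 mxE.
  by rewrite [Sel _ _ _]mxE mxvec_index_inj eqxx /= (negPf Hb) mulr0.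
move=> j Hj; rewrite mxE big1 // => b _.
by rewrite !mxE mxvec_index_inj (negPf Hj) mulr0.
Qed.

Variable P : 'M[R]_(n * m, n).
Hypothesis HP : ctrb A B *m P = 1%:M.

Local Notation c := (- (A ^+ n *m xn)).
Definition Kt t : 'M[R]_(m, D) :=
  \sum_(j < n | (j + t).+1 == n) SV j *m P *m c.
Fixpoint W t : 'M[R]_D := if t is t'.+1 then M0 *m W t' + Su^T *m Kt t' else 1%:M.

Lemma SuW t : Su *m W t.+1 = Kt t.
Proof. by rewrite /= mulmxDr !mulmxA SuM0 mul0mx add0r SuSuT mul1mx. Qed.
Lemma SxW t : Sx *m W t.+1 = xn *m W t.
Proof. by rewrite /= mulmxDr !mulmxA SxM0 SxSuT mul0mx addr0. Qed.
Lemma RW j t : RS j *m W t = RS (j + t).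
Proof.
elim: t j => [|t IH] j; first by rewrite mulmx1 addn0.
by rewrite /= mulmxDr !mulmxA RM0 RSuT mul0mx addr0 IH addSnnS.
Qed.
Lemma xnW t : xn *m W t = A *m (Sx *m W t) + B *m (Su *m W t).
Proof. by rewrite /xnext mulmxDl !mulmxA. Qed.

Lemma exprSmx k : A ^+ k.+1 = A *m A ^+ k.
Proof. by rewrite exprS. Qed.
Lemma expr0mx : A ^+ 0 = 1%:M.
Proof. by []. Qed.

Lemma Xinv s : Sx *m W s.+1 = A ^+ s *m xn +
  \sum_(j < n | (n <= j + s)%N) A ^+ (j + s - n) *m B *m (SV j *m P *m c).
Proof.
elim: s => [|s IH].
  rewrite SxW /= mulmx1 expr0mx mul1mx big_pred0 ?addr0 // => j.
  by rewrite addn0 leqNgt ltn_ord.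
rewrite SxW xnW IH SuW mulmxDr mulmxA -exprSmx -addrA; congr (_ + _).
rewrite /Kt mulmx_sumr mulmx_sumr big_mkcond [X in _ + X = _]big_mkcond [RHS]big_mkcond.
rewrite -big_split; apply: eq_bigr => j _ /=; rewrite addnS.
case: (leqP n (j + s)) => H1.
  rewrite (leqW H1).
  have -> : ((j + s).+1 == n) = false by apply/negbTE; rewrite neq_ltn ltnS H1 orbT.
  by rewrite addr0 (subSn H1) exprSmx !mulmxA.
case: eqP => E.
  by rewrite E leqnn subnn expr0mx mul1mx add0r mulmxA.
have -> : (n <= (j + s).+1)%N = false.
  by apply/negbTE; rewrite -ltnNge ltn_neqAle H1 andbT; apply/eqP.
by rewrite addr0.
Qed.

Lemma Xn : Sx *m W n.+1 = 0.
Proof.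
rewrite Xinv (eq_bigl xpredT) => [|j]; last by rewrite leq_addl.
under eq_bigr do rewrite addnK.
under eq_bigr do rewrite !mulmxA.
by rewrite -!mulmx_suml -ctrb_sum HP mul1mx addrN.
Qed.

Lemma Kbig t : (n <= t)%N -> Kt t = 0.
Proof.
move=> Ht; rewrite /Kt big_pred0 // => j.
apply/negbTE; rewrite neq_ltn; apply/orP; right.
by rewrite ltnS (leq_trans Ht (leq_addl _ _)).
Qed.

Lemma Xbig' k : Sx *m W (n + k).+1 = 0.
Proof.
elim: k => [|k IH]; first by rewrite addn0 Xn.
by rewrite addnS SxW xnW IH SuW Kbig ?leq_addr // !mulmx0 addr0.
Qed.

Lemma Xbig s : (n <= s)%N -> Sx *m W s.+1 = 0.
Proof. by move=> Hle; rewrite -(subnKC Hle) Xbig'. Qed.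


Lemma Wzero t : (n + N < t)%N ->
  Sx *m W t = 0 /\ Su *m W t = 0 /\ S0 *m W t = 0.
Proof.
case: t => // t; rewrite ltnS => Ht.
have Hn : (n <= t)%N by apply: leq_trans Ht; apply: leq_addr.
split; first exact: Xbig.
split; first by rewrite SuW Kbig.
have -> : S0 = RS 0 by [].
rewrite RW add0n Rsel_big //.
by apply: leq_ltn_trans (leq_addl n N) _; rewrite ltnS.
Qed.


Lemma qf_sum (T : nat) (X : nat -> 'M[R]_D) v :
  qf (\sum_(0 <= t < T) X t) v = \sum_(0 <= t < T) qf (X t) v.
Proof. by rewrite /qf mulmx_sumr mulmx_suml summxE. Qed.

Lemma qfB (X Y : 'M[R]_D) v : qf (X - Y) v = qf X v - qf Y v.
Proof. by rewrite /qf mulmxBr mulmxBl addE oppE. Qed.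

Lemma main_bound : exists Y : 'M[R]_D, Y^T = Y /\
  forall i, psd (Hs i - 0) /\ psd (Y - Hs i).
Proof.
pose T := (n + N).+1.
pose X t := gamma ^+ t *: ((W t)^T *m G *m W t).
have symX t : (X t)^T = X t.
  by rewrite /X trZ !trmx_mul trmxK G_sym !mulmxA.
exists (\sum_(0 <= t < T) X t); split.
  apply/matrixP => i j; rewrite mxE !summxE; apply: eq_bigr => t _.
  by move: (congr1 (fun M : 'M[R]_D => M i j) (symX t)); rewrite mxE.
move=> i; have [HT [Hp _]] := Hinv i; split; first by rewrite subr0.
move=> z; rewrite -/(qf _ z) qfB qf_sum subr_ge0.
have f0 t : 0 <= qf (X t) z.
  by rewrite /X qfZ qfM mulr_ge0 ?exprn_ge0 //; apply: G_psd.
have fT t : (T <= t)%N -> qf (X t) z = 0.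
  move=> Ht; have [E1 [E2 E3]] := Wzero Ht.
  rewrite /X qfZ qfM qfG mulmxA mulmxBl E1 E3 subrr mul0mx qf0v.
  by rewrite mulmxA E2 mul0mx qf0v addr0 mulr0.
have dyn : forall t, exists d, W t.+1 *m z = M0 *m (W t *m z) + Su^T *m d.
  by move=> t; exists (Kt t *m z); rewrite /= mulmxDl !mulmxA.
have H := traj_bound i dyn.
rewrite /= mul1mx in H.
apply: le_trans H _.
have -> : \sum_(0 <= t < i) gamma ^+ t * qf G (W t *m z) = \sum_(0 <= t < i) qf (X t) z.
  by apply: eq_bigr => t _; rewrite /X qfZ qfM.
case: (leqP i T) => HiT.
  rewrite (big_cat_nat (leq0n i) HiT) /= lerDl.
  by apply: sumr_ge0 => t _.
rewrite (big_cat_nat (leq0n T) (ltnW HiT)) /= [X in _ + X <= _]big1_seq ?addr0 //.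
by move=> t /andP [_]; rewrite mem_index_iota => /andP [Ht _]; apply: fT.
Qed.

End Main.

Unset Implicit Arguments.

Theorem lemma7 (R : realFieldType) (n m N : nat)
  (A : 'M[R]_n) (B : 'M[R]_(n, m)) (Q : 'M[R]_n) (Rc : 'M[R]_m) (gamma : R) :
  Q^T = Q -> psd Q ->
  Rc^T = Rc -> pd Rc ->
  0 <= gamma -> gamma < 1 ->
  controllable A B ->
  exists Y : 'M[R]_(dimH n m N),
    Y^T = Y /\
    forall i : nat,
      loewner_le 0 (Hseq N A B Q Rc gamma i) /\
      loewner_le (Hseq N A B Q Rc gamma i) Y.
Proof.
move=> QT Qpsd RcT Rcpd g0 _ Hc.
have : row_full (ctrb A B)^T by rewrite /row_full mxrank_tr Hc.
case/row_fullP => X HX.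
have HP : ctrb A B *m X^T = 1%:M.
  by rewrite -[ctrb A B]trmxK -trmx_mul HX trmx1.
have [Y [YT HY]] := @main_bound R n m N A B Q Rc QT Qpsd RcT Rcpd gamma g0 X^T HP.
by exists Y; split.
Qed.
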